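(* Let $s\ge2$, let $(g_{\mu\nu})$ be a real symmetric invertible $(s+1)\times(s+1)$ matrix with inverse $(g^{\mu\nu})$, and let $\mathcal{A}=\bigoplus_n\mathcal{A}_n$ be the graded unital associative $\mathbb{C}$-algebra generated by $\nabla_0,\dots,\nabla_s$ in degree $1$ with relations $\sum_{\lambda,\mu}g^{\lambda\mu}[\nabla_\lambda,[\nabla_\mu,\nabla_\nu]]=0$ for $\nu=0,\dots,s$. Then $\mathcal{A}$ has exponential growth, i.e. $\dim\mathcal{A}_n$ grows exponentially in $n$. *)

(* Defs.v *)
(* Concrete model of the graded algebra A = T(V)/I where
   V = C^(s+1) with basis nabla_0..nabla_s, T(V) the free (tensor) algebra,
   and I the two-sided ideal generated by the cubic relations
     r_nu = sum_{lambda,mu} g^{lambda mu} [nabla_lambda,[nabla_mu,nabla_nu]].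
   T(V)_n is the space of functions on words of length n (coefficients
   w.r.t. the monomial basis), I_n is spanned by the elements
   u * r_nu * v with u, v monomials, |u| + 3 + |v| = n, and
   dim A_n = dim T(V)_n - dim I_n. *)
From HB Require Import structures.
From mathcomp Require Import all_boot all_order all_algebra.
From mathcomp Require Import reals.
From mathcomp.real_closed Require Import complex.
Set Implicit Arguments. Unset Strict Implicit. Unset Printing Implicit Defensive.
Import Order.TTheory GRing.Theory Num.Theory.
Local Open Scope ring_scope.

Section YM.
Variables (R : realType) (s : nat).
Local Notation C := (complex R).

Definition word (n : nat) := (n.-tuple 'I_s.+1).

Definition freeDeg (n : nat) := {ffun word n -> C^o}.

(* coefficient of the word t (a sequence of letters) in
   r_nu = sum_{lambda,mu} ginv lambda mu [nabla_lambda,[nabla_mu,nabla_nu]],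
   using [a,[b,c]] = abc - acb - bca + cba *)
Definition relcoef (ginv : 'M[R]_s.+1) (nu : 'I_s.+1) (t : seq 'I_s.+1) : C :=
  \sum_(lam < s.+1) \sum_(mu < s.+1) real_complex R (ginv lam mu) *
     ((t == [:: lam; mu; nu])%:R - (t == [:: lam; nu; mu])%:R
      - (t == [:: mu; nu; lam])%:R + (t == [:: nu; mu; lam])%:R).

(* the element u * r_nu * v of freeDeg n, where u = first i letters of c and
   v = last n - i - 3 letters of c *)
Definition idealGen (ginv : 'M[R]_s.+1) (n : nat) (nu : 'I_s.+1) (i : nat)
  (c : word n) : freeDeg n :=
  [ffun w : word n =>
     if (take i w == take i c) && (drop (i + 3) w == drop (i + 3) c)
     then relcoef ginv nu (take 3 (drop i w)) else 0].

Definition idealDeg (ginv : 'M[R]_s.+1) (n : nat) : {vspace freeDeg n} :=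
  (\sum_(nu < s.+1) \sum_(i < n.-2) \sum_(c : word n)
      <[idealGen ginv nu i c]>)%VS.

Definition dimA (ginv : 'M[R]_s.+1) (n : nat) : nat :=
  (\dim (fullv : {vspace freeDeg n}) - \dim (idealDeg ginv n))%N.

End YM.

(* Main.v *)
Require Import Defs.
From HB Require Import structures.
From mathcomp Require Import all_boot all_order all_algebra.
From mathcomp Require Import reals.
From mathcomp.real_closed Require Import complex.
From mathcomp Require Import zify.
Import Order.TTheory GRing.Theory Num.Theory.
Local Open Scope ring_scope.

Section Seqs.
Variable T : Type.
Lemma drop_split j k (x : seq T) : (j <= k)%N ->
  drop j x = drop j (take k x) ++ drop k x.
Proof.
move=> jk; rewrite -{1}(cat_take_drop (k - j) (drop j x)) take_drop drop_drop.
by rewrite subnK.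
Qed.
Lemma drop_cat_le j (x y : seq T) : (j <= size x)%N ->
  drop j (x ++ y) = drop j x ++ y.
Proof.
move=> h; rewrite drop_cat; case: ltnP => // h2.
have -> : j = size x by apply/anti_leq; rewrite h h2.
by rewrite subnn drop0 drop_size.
Qed.
Lemma take3_drop_take i k (x : seq T) : (i + 3 <= k)%N ->
  take 3 (drop i (take k x)) = take 3 (drop i x).
Proof.
move=> h; rewrite -{1}(subnK (_ : i <= k)%N); last by lia.
by rewrite -take_drop take_takel //; lia.
Qed.
End Seqs.

Set Implicit Arguments. Unset Strict Implicit. Unset Printing Implicit Defensive.
Section Proof.
Variables (R : realType) (s : nat) (ginv : 'M[R]_s.+1).
Local Notation C := (complex R).
Local Notation F n := (freeDeg R s n).
Local Notation W n := (word s n).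
Local Notation gen := (idealGen ginv).
Local Notation I n := (idealDeg ginv n).
Local Notation rc := (relcoef ginv).

Definition fv n (f : F n) (x : seq 'I_s.+1) : C :=
  if @insub _ _ (W n) x is Some t then f t else 0.

Lemma fv_tuple n (f : F n) (w : W n) : fv f w = f w.
Proof. by rewrite /fv valK. Qed.

Lemma fv_lin n (k : C) (f g : F n) x : fv (k *: f + g) x = k * fv f x + fv g x.
Proof. by rewrite /fv; case: insub => [t|]; rewrite ?ffunE ?mulr0 ?addr0. Qed.

Definition mkw n (x : seq 'I_s.+1) : W n := insubd (nseq_tuple n ord0) x.
Lemma mkwK n x : size x = n -> val (mkw n x) = x.
Proof. by move=> h; rewrite /mkw insubdK //; apply/eqP. Qed.

Lemma mkwT n x : size x = n -> tval (mkw n x) = x.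
Proof. exact: mkwK. Qed.

Lemma dimF n : \dim {: F n} = (s.+1 ^ n)%N.
Proof. by rewrite dimvf /dim /= card_tuple card_ord muln1. Qed.


Lemma fv_gen m nu i (c : W m) x : size x = m ->
  fv (gen nu i c) x = if (take i x == take i c) && (drop (i + 3) x == drop (i + 3) c)
     then rc nu (take 3 (drop i x)) else 0.
Proof. by move=> h; rewrite -(mkwK h) fv_tuple ffunE. Qed.

Definition Ra n (a : 'I_s.+1) (f : F n) : F n.+1 :=
  [ffun w : W n.+1 => if drop n w == [:: a] then fv f (take n w) else 0].
Definition Lr n (nu : 'I_s.+1) (f : F n) : F n.+3 :=
  [ffun w : W n.+3 => fv f (take n w) * rc nu (drop n w)].
Definition delta n (u : W n) : F n := [ffun w => (w == u)%:R].

Lemma genB n nu i (c : W n.+3) : (i < n)%N ->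
  gen nu i c = Ra (nth ord0 c n.+2) (gen nu i (mkw n.+2 (take n.+2 c))).
Proof.
move=> hi; apply/ffunP => w; rewrite !ffunE.
have sw := size_tuple w; have sc := size_tuple c.
have stw : size (take n.+2 w) = n.+2 by rewrite size_takel // sw; lia.
have stc : size (take n.+2 c) = n.+2 by rewrite size_takel // sc; lia.
rewrite fv_gen // mkwT //.
rewrite !take_takel ?take3_drop_take; try lia.
rewrite (drop_split _ (i + 3) n.+2 w); last lia.
rewrite (drop_split _ (i + 3) n.+2 c); last lia.
rewrite (drop_nth ord0 (_ : n.+2 < size c)%N) ?sc // [drop n.+3 c]drop_oversize ?sc //.
rewrite eqseq_cat; last by rewrite !size_drop stw stc.
by case: (take i w == _); case: (drop _ (take _ w) == _); case: (drop _ w == _).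
Qed.

Lemma fv_delta n (u : W n) x : size x = n -> fv (delta u) x = (x == tval u)%:R.
Proof.
by move=> h; rewrite -(mkwK h) fv_tuple ffunE; congr (_%:R).
Qed.

Lemma genC n nu (c : W n.+3) : gen nu n c = Lr nu (delta (mkw n (take n c))).
Proof.
apply/ffunP => w; rewrite !ffunE.
have sw := size_tuple w; have sc := size_tuple c.
have stw : size (take n w) = n by rewrite size_takel // sw; lia.
have stc : size (take n c) = n by rewrite size_takel // sc; lia.
rewrite fv_delta // mkwT //.
rewrite [drop (n + 3) w]drop_oversize ?sw ?addn3 //.
rewrite [drop n.+3 c]drop_oversize ?sc // eqxx andbT.
rewrite [take 3 _]take_oversize; last by rewrite size_drop sw; lia.
by case: (take n w == _); rewrite ?mul1r ?mul0r.
Qed.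


Lemma scaleFE n (k : C) (f : F n) w : (k *: f) w = k * f w.
Proof. by rewrite ffunE. Qed.

Lemma genD n nu nu' i (c : W n) : (i + 3 <= n)%N ->
  Lr nu (gen nu' i c) =
  \sum_(t : W 3) rc nu t *: gen nu' i (mkw n.+3 (c ++ t)).
Proof.
move=> hi; have hin : (i < n)%N by lia.
apply/ffunP => w; rewrite !ffunE sum_ffunE.
have sw := size_tuple w; have sc := size_tuple c.
have stw : size (take n w) = n by rewrite size_takel // sw; lia.
rewrite fv_gen // take_takel ?take3_drop_take //; try lia.
set t0 : W 3 := mkw 3 (drop n w).
have ht0 : tval t0 = drop n w by rewrite mkwT // size_drop sw; lia.
under eq_bigr => t _.
  rewrite scaleFE ffunE !mkwK; last by rewrite size_cat sc size_tuple addn3.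
  rewrite take_cat sc hin.
  rewrite drop_cat_le ?sc // (drop_split _ (i + 3) n w) // eqseq_cat; last by rewrite !size_drop stw sc.
  rewrite -ht0 (inj_eq val_inj).
  over.
rewrite (bigD1 t0) //= eqxx andbT big1 ?addr0; last first.
  by move=> t; rewrite eq_sym => /negbTE ->; rewrite !andbF mulr0.
by rewrite ht0 mulrC.
Qed.


Lemma addFE n (f g : F n) w : (f + g) w = f w + g w.
Proof. by rewrite ffunE. Qed.

Lemma Ra_lin n a : linear (@Ra n a).
Proof.
move=> k f g; apply/ffunP => w; rewrite addFE scaleFE !ffunE fv_lin.
by case: ifP => _; rewrite ?mulr0 ?addr0.
Qed.

Lemma Lr_lin n nu : linear (@Lr n nu).
Proof.
move=> k f g; apply/ffunP => w; rewrite addFE scaleFE !ffunE fv_lin.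
by rewrite mulrDl mulrA.
Qed.

Definition RaL n a : {linear F n -> F n.+1} :=
  HB.pack (@Ra n a) (GRing.isLinear.Build _ _ _ _ (@Ra n a) (@Ra_lin n a)).
Definition LrL n nu : {linear F n -> F n.+3} :=
  HB.pack (@Lr n nu) (GRing.isLinear.Build _ _ _ _ (@Lr n nu) (@Lr_lin n nu)).
Definition RaH n a : 'Hom(F n, F n.+1) := linfun (RaL n a).
Definition LrH n nu : 'Hom(F n, F n.+3) := linfun (LrL n nu).
Lemma RaHE n a f : RaH n a f = Ra a f.
Proof. exact: (lfunE (RaL n a) f). Qed.
Lemma LrHE n nu f : LrH n nu f = Lr nu f.
Proof. exact: (lfunE (LrL n nu) f). Qed.

Lemma gen_in m nu i (c : W m) : (i < m.-2)%N -> gen nu i c \in I m.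
Proof.
move=> hi; rewrite memvE /idealDeg; apply: (sumv_sup nu) => //.
apply: (sumv_sup (Ordinal hi)) => //.
exact: (sumv_sup c).
Qed.

Definition X n : {vspace F n.+3} :=
  ((\sum_(a < s.+1) (RaH n.+2 a @: I n.+2)) +
   (\sum_(nu < s.+1) (LrH n nu @: (I n)^C)))%VS.

Lemma incl1 n nu i (c : W n.+3) : (i < n)%N -> gen nu i c \in X n.
Proof.
move=> hi; rewrite genB // -RaHE.
apply: (subvP (addvSl _ _)).
apply: (subvP (sumv_sup (nth ord0 c n.+2) _ (subvv _))) => //.
apply: memv_img; apply: gen_in => /=.
lia.
Qed.

Lemma incl2 n nu : (LrH n nu @: I n <= X n)%VS.
Proof.
rewrite /idealDeg limg_sum; apply/subv_sumP => nu' _.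
rewrite limg_sum; apply/subv_sumP => i _.
rewrite limg_sum; apply/subv_sumP => c _.
rewrite limg_line -memvE LrHE genD; last by have := ltn_ord i; lia.
apply: memv_suml => t _; apply: memvZ; apply: incl1.
by have := ltn_ord i; lia.
Qed.

Lemma incl n : (I n.+3 <= X n)%VS.
Proof.
rewrite {1}/idealDeg; apply/subv_sumP => nu _.
rewrite big_ord_recr /= subv_add; apply/andP; split.
  apply/subv_sumP => i _; apply/subv_sumP => c _.
  by rewrite -memvE; apply: incl1.
apply/subv_sumP => c _; rewrite -memvE genC.
have : delta (mkw n (take n c)) \in ((I n) + (I n)^C)%VS by rewrite addv_complf memvf.
case/memv_addP => x xI [y yC ->].
rewrite -LrHE linearD /=.
apply: memvD.
  by apply: (subvP (incl2 n nu)); apply: memv_img.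
apply: (subvP (addvSr _ _)).
apply: (subvP (sumv_sup nu _ (subvv _))) => //.
exact: memv_img.
Qed.


Lemma dim_img m k (f : 'Hom(F m, F k)) (A : {vspace F m}) :
  (\dim (f @: A) <= \dim A)%N.
Proof. by rewrite -(limg_ker_dim f A) leq_addl. Qed.

Lemma dimX n : (\dim (X n) <=
   s.+1 * \dim (I n.+2) + s.+1 * (s.+1 ^ n - \dim (I n)))%N.
Proof.
apply: leq_trans (dimv_add_leqif _ _) _.
apply: leq_add.
  apply: leq_trans (dimv_leq_sum _ _ _) _.
  have -> : (s.+1 * \dim (I n.+2) = \sum_(a < s.+1) \dim (I n.+2))%N.
    by rewrite sum_nat_const card_ord.
  by apply: leq_sum => a _; exact: dim_img.
apply: leq_trans (dimv_leq_sum _ _ _) _.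
have -> : (s.+1 * (s.+1 ^ n - \dim (I n)) = \sum_(a < s.+1) \dim (I n)^C)%N.
  by rewrite sum_nat_const card_ord dimv_compl dimF.
by apply: leq_sum => a _; exact: dim_img.
Qed.

Lemma recI n : (\dim (I n.+3) <=
   s.+1 * \dim (I n.+2) + s.+1 * (s.+1 ^ n - \dim (I n)))%N.
Proof. exact: leq_trans (dimvS (incl n)) (dimX n). Qed.

Lemma dimI_le n : (\dim (I n) <= s.+1 ^ n)%N.
Proof. by rewrite -dimF dimvS // subvf. Qed.

Lemma dimI_small n : (n < 3)%N -> \dim (I n) = 0%N.
Proof.
move: n => [|[|[|n]]] // _;
  by rewrite /idealDeg big1 ?dimv0 // => nu _; rewrite big_ord0.
Qed.

Lemma dimAE n : dimA ginv n = (s.+1 ^ n - \dim (I n))%N.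
Proof. by rewrite /dimA dimF. Qed.


Lemma growth (hs : (2 <= s)%N) n :
  (2 * dimA ginv n <= dimA ginv n.+1)%N /\ (2 * dimA ginv n.+1 <= dimA ginv n.+2)%N.
Proof.
elim: n => [|n [h1 h2]].
  rewrite !dimAE !dimI_small // !subn0 expn0 expn1; split; first lia.
  rewrite expnS expn1; nia.
split => //.
move: h1 h2; rewrite !dimAE => h1 h2.
have r := recI n; have l2 := dimI_le n.+2; have l0 := dimI_le n.
set D3 := \dim (I n.+3) in r *; set D2 := \dim (I n.+2) in r l2 h2 *.
set D0 := \dim (I n) in r l0 h1 *.
set Q := (s.+1 ^ n.+2)%N in l2 h2 *.
set P := (s.+1 ^ n)%N in l0 h1 r *.
rewrite (expnS _ n.+2) -/Q.
have h4 : (4 * (P - D0) <= Q - D2)%N by lia.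
set e := (Q - D2)%N in h4 *; set al := (P - D0)%N in h4 r *.
have hQ : (s.+1 * Q = s.+1 * D2 + s.+1 * e)%N by rewrite -mulnDr /e subnKC.
have h5 : (4 * (s.+1 * al) <= s.+1 * e)%N by rewrite mulnCA leq_mul2l h4 orbT.
have h6 : (3 * e <= s.+1 * e)%N by rewrite leq_mul2r; apply/orP; right; lia.
lia.
Qed.

Lemma pow2 (hs : (2 <= s)%N) n : (2 ^ n <= dimA ginv n)%N.
Proof.
elim: n => [|n IH]; first by rewrite dimAE dimI_small.
by apply: leq_trans (growth hs n).1; rewrite expnS leq_mul2l IH orbT.
Qed.

End Proof.

Unset Implicit Arguments.
Theorem mainTheorem5 (R : realType) (s : nat) (hs : (2 <= s)%N)
    (g : 'M[R]_s.+1) (gsym : g^T = g) (ginv_ok : g \in unitmx) :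
  exists r : R, 1 < r /\
    exists N : nat, forall n : nat, (N <= n)%N ->
      r ^+ n <= (dimA (invmx g) n)%:R.
Proof.
exists 2; split; first by rewrite ltr1n.
exists 0%N => n _; rewrite -natrX ler_nat.
exact: pow2.
Qed.
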